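(* For every integer $k\geq 1$, $$G_k(x)=\frac{1+2x\sum_{0\le j\le k-1,\; j\equiv k \pmod 2}C(k,j)4^{j}G_j(x)}{1-2^{k}(2^{k+1}+1)x}.$$ In particular, if $k$ is even then $G_k(x)$ is expressed (with rational-function coefficients, plus a rational function) through $G_0,G_2,\dots,G_{k-2}$ only, and if $k$ is odd then through $G_1,G_3,\dots,G_{k-2}$ only.
   Context: The Stern polynomials $B_n(t)\in\mathbb{Z}[t]$ are defined by $B_0(t)=0$, $B_1(t)=1$, and for $n\geq 1$: $B_{2n}(t)=tB_n(t)$, $B_{2n+1}(t)=B_n(t)+B_{n+1}(t)$. For $n\geq1$ let $e(n)=\deg B_n(t)$. For $k,n\geq 0$ let $S_k(n)=\sum_{a\geq 1:\;e(a)=n}a^{k}$ (a finite sum) and $G_k(x)=\sum_{a=1}^{\infty}a^{k}x^{e(a)}=\sum_{n=0}^{\infty}S_k(n)x^n$. $C(k,j)=\binom{k}{j}$. *)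

(* Defs.v *)
From HB Require Import structures.
From mathcomp Require Import all_boot all_order all_algebra.
Set Implicit Arguments. Unset Strict Implicit. Unset Printing Implicit Defensive.
Import Order.TTheory GRing.Theory Num.Theory.
Local Open Scope ring_scope.

(* Stern polynomials, via fuel: Bf fuel n = B_n whenever fuel >= n.
   B_0 = 0, B_1 = 1, B_{2m} = t B_m, B_{2m+1} = B_m + B_{m+1}. *)
Fixpoint Bf (fuel n : nat) : {poly int} :=
  match fuel with
  | 0%N => 0
  | f.+1 =>
      if n == 0%N then 0
      else if n == 1%N then 1
      else if odd n then Bf f n./2 + Bf f n./2.+1
      else 'X * Bf f n./2
  end.

Definition B (n : nat) : {poly int} := Bf n n.

Definition e (n : nat) : nat := (size (B n)).-1.

(* s is the (finite) sum S_k(n) = sum_{a >= 1, e(a) = n} a^k : M bounds the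
   finite index set, and the value of the truncated sum does not depend on
   the choice of such a bound M. *)
Definition is_S (k n s : nat) : Prop :=
  exists M : nat, (forall a : nat, (0 < a)%N -> e a = n -> (a < M)%N) /\
    s = (\sum_(1 <= a < M | e a == n) a ^ k)%N.

Definition fps := nat -> int.
Definition fps_mul (f g : fps) : fps :=
  fun n => \sum_(i < n.+1) f i * g (n - i)%N.
Definition fps_add (f g : fps) : fps := fun n => f n + g n.
Definition fps_scale (c : int) (f : fps) : fps := fun n => c * f n.
Definition fps_const (c : int) : fps := fun n => if n == 0%N then c else 0.
Definition fps_X : fps := fun n => if n == 1%N then 1 else 0.
Definition fps_sum (m : nat) (P : pred nat) (F : nat -> fps) : fps :=
  fun n => \sum_(j < m | P j) F j n.

(* G_k(x) = sum_n S_k(n) x^n, given the family of coefficients S. *)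
Definition G (S : nat -> nat -> nat) (k : nat) : fps := fun n => (S k n)%:Z.

(* Main.v *)
Require Import Defs.
From HB Require Import structures.
From mathcomp Require Import all_boot all_order all_algebra.
From mathcomp Require Import zify ring.
From Stdlib Require Import FunctionalExtensionality.
Import Order.TTheory GRing.Theory Num.Theory.
Local Open Scope ring_scope.

Lemma Bf_stable f1 f2 n : (n <= f1)%N -> (n <= f2)%N -> Bf f1 n = Bf f2 n.
Proof.
elim: f1 f2 n => [|f1 IH] [|f2] n /= h1 h2.
- by [].
- by move: h1; rewrite leqn0 => /eqP ->.
- by move: h2; rewrite leqn0 => /eqP ->.
case: eqP => // n0; case: eqP => // n1.
have hh := odd_double_half n.
case: ifP => hod.
  have h3 : (n./2.+1 <= f1)%N by rewrite hod /= in hh; lia.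
  have h4 : (n./2.+1 <= f2)%N by rewrite hod /= in hh; lia.
  by rewrite (IH f2) // ?(IH f2 n./2.+1) //; lia.
by rewrite (IH f2) //; rewrite hod /= in hh; lia.
Qed.

Lemma B_def n : B n = Bf n.+1 n.
Proof. by apply: Bf_stable. Qed.

Lemma B1 : B 1 = 1.
Proof. by []. Qed.

Lemma Bf_S f n : Bf f.+1 n = if n == 0%N then 0 else if n == 1%N then 1
  else if odd n then Bf f n./2 + Bf f n./2.+1 else 'X * Bf f n./2.
Proof. by []. Qed.

Lemma B_even m : (0 < m)%N -> B (m.*2) = 'X * B m.
Proof.
move=> m0; rewrite B_def Bf_S.
have -> : (m.*2 == 0%N) = false by lia.
have -> : (m.*2 == 1%N) = false by lia.
rewrite odd_double doubleK /B; congr (_ * _); apply: Bf_stable; lia.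
Qed.

Lemma B_odd m : (0 < m)%N -> B (m.*2.+1) = B m + B m.+1.
Proof.
move=> m0; rewrite B_def Bf_S.
have -> : (m.*2.+1 == 0%N) = false by lia.
have -> : (m.*2.+1 == 1%N) = false by lia.
have -> : (m.*2.+1)./2 = m by rewrite -divn2; lia.
have -> : odd (m.*2.+1) = true by rewrite /= odd_double.
rewrite /B.
by congr (_ + _); apply: Bf_stable; lia.
Qed.

Lemma pos_add (p q : {poly int}) : 0 < lead_coef p -> 0 < lead_coef q ->
  0 < lead_coef (p + q) /\ size (p + q) = maxn (size p) (size q).
Proof.
move=> hp hq; case: (ltngtP (size p) (size q)) => h.
- by rewrite lead_coefDr // [p + q]addrC size_polyDl.
- by rewrite lead_coefDl // size_polyDl.
have hc : (p + q)`_(size p).-1 = lead_coef p + lead_coef q.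
  by rewrite coefD !lead_coefE h.
have hpos : 0 < (p + q)`_(size p).-1 by rewrite hc addr_gt0.
have hs0 : (0 < size p)%N.
  rewrite lt0n size_poly_eq0 -lead_coef_eq0; apply/eqP=> e0; by rewrite e0 in hp.
have hsz : size (p + q) = size p.
  apply/eqP; rewrite eqn_leq; apply/andP; split.
    by have := size_polyD p q; rewrite h maxnn.
  rewrite leqNgt; apply/negP=> hlt.
  have : (p + q)`_(size p).-1 = 0 by apply: nth_default; rewrite -ltnS prednK.
  by move=> e0; rewrite e0 in hpos.
by rewrite lead_coefE hsz.
Qed.

Definition s n := size (B n).

Lemma B_pos n : (0 < n)%N -> 0 < lead_coef (B n).
Proof.
elim/ltn_ind: n => n IH n0.
have := odd_double_half n.
case: (posnP n./2) => h2.
  rewrite h2 => hn; have -> : n = 1%N by lia.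
  by rewrite B1 lead_coef1.
case: (odd n) => /= hn.
  have h1 : (n./2 < n)%N by lia.
  have h3 : (n./2.+1 < n)%N by lia.
  rewrite -hn add1n B_odd //.
  by case: (@pos_add _ _ (IH _ h1 h2) (IH _ h3 (ltn0Sn _))).
rewrite -hn add0n B_even // mulrC lead_coefMX; apply: IH; lia.
Qed.

Lemma s_pos n : (0 < n)%N -> (0 < s n)%N.
Proof.
move=> n0; have := @B_pos _ n0; rewrite /s lt0n size_poly_eq0 -lead_coef_eq0.
by apply: contraTneq => ->.
Qed.

Lemma s_even m : (0 < m)%N -> s m.*2 = (s m).+1.
Proof.
move=> m0; rewrite /s B_even // mulrC size_mulX // -lead_coef_eq0.
by have := @B_pos _ m0; apply: contraTneq => ->.
Qed.

Lemma s_odd m : (0 < m)%N -> s m.*2.+1 = maxn (s m) (s m.+1).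
Proof.
move=> m0; rewrite /s B_odd //; by case: (@pos_add _ _ (@B_pos _ m0) (@B_pos m.+1 (ltn0Sn _))).
Qed.

Lemma s1 : s 1 = 1%N.
Proof. by rewrite /s B1 size_poly1. Qed.

Lemma s_lip n : (0 < n)%N -> (s n.+1 <= (s n).+1)%N /\ (s n <= (s n.+1).+1)%N.
Proof.
elim/ltn_ind: n => n IH n0.
have hh := odd_double_half n.
case: (posnP n./2) => h2.
  have -> : n = 1%N by lia.
  by rewrite (@s_even 1 isT) s1.
have hm : (n./2 < n)%N by lia.
move: (IH _ hm h2) hh; set m := n./2 => IHm hh.
case hod: (odd n); rewrite hod /= in hh.
  have -> : n.+1 = (m.+1).*2 by lia.
  have -> : n = m.*2.+1 by lia.
  rewrite s_even // s_odd //.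
  have [_ h] := IHm.
  by split; lia.
have -> : n.+1 = m.*2.+1 by lia.
have -> : n = m.*2 by lia.
rewrite s_even // s_odd //.
have [h _] := IHm.
by split; lia.
Qed.

Lemma e_s a : e a = (s a).-1.
Proof. by []. Qed.

Lemma s_2 a : (0 < a)%N -> s (a.*2) = (s a).+1.
Proof. exact: s_even. Qed.

Lemma s_4p1 a : (0 < a)%N -> s (4 * a + 1) = (s a).+1.
Proof.
move=> a0; have -> : (4 * a + 1 = (a.*2).*2.+1)%N by lia.
rewrite s_odd; last lia.
rewrite s_even // s_odd //.
have [h _] := @s_lip a a0; lia.
Qed.

Lemma s_4m1 a : (0 < a)%N -> s (4 * a - 1) = (s a).+1.
Proof.
move=> a0; have -> : (4 * a - 1 = (a.*2.-1).*2.+1)%N by lia.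
rewrite s_odd; last lia.
have -> : (a.*2.-1).+1 = a.*2 by lia.
rewrite s_even //.
case: (ltngtP a 1) => ha; first lia.
  have -> : a.*2.-1 = (a.-1).*2.+1 by lia.
  rewrite s_odd; last lia.
  have -> : (a.-1).+1 = a by lia.
  have [_ h] := @s_lip (a.-1) ltac:(lia).
  rewrite (_ : (a.-1).+1 = a) in h; last lia.
  lia.
subst a; rewrite (_ : (1.*2.-1 = 1)%N) // s1; lia.
Qed.

Lemma e_2 a : (0 < a)%N -> e (a.*2) = (e a).+1.
Proof. by move=> a0; rewrite !e_s s_2 //; have := @s_pos a a0; lia. Qed.
Lemma e_4p1 a : (0 < a)%N -> e (4 * a + 1) = (e a).+1.
Proof. by move=> a0; rewrite !e_s s_4p1 //; have := @s_pos a a0; lia. Qed.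
Lemma e_4m1 a : (0 < a)%N -> e (4 * a - 1) = (e a).+1.
Proof. by move=> a0; rewrite !e_s s_4m1 //; have := @s_pos a a0; lia. Qed.
Lemma e1 : e 1 = 0%N.
Proof. by rewrite e_s s1. Qed.

Lemma decomp a : (1 < a)%N -> exists b, [/\ (0 < b)%N, (b < a)%N, (a <= 4 * b + 1)%N
  & e a = (e b).+1].
Proof.
move=> a1; have hh := odd_double_half a.
case hod: (odd a); rewrite hod /= in hh; last first.
  exists a./2; rewrite -e_2; last lia.
  have -> : (a./2).*2 = a by lia.
  split=> //; lia.
have hc := odd_double_half a./2.
case hoc: (odd a./2); rewrite hoc /= in hc.
  exists (a./2)./2.+1; rewrite -e_4m1; last lia.
  have -> : (4 * (a./2)./2.+1 - 1 = a)%N by lia.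
  split=> //; lia.
exists (a./2)./2; rewrite -e_4p1; last lia.
have -> : (4 * (a./2)./2 + 1 = a)%N by lia.
split=> //; lia.
Qed.

Lemma e_ge1 a : (1 < a)%N -> (0 < e a)%N.
Proof. by move=> /(decomp a) [b [_ _ _ ->]]. Qed.

Lemma e_bound a : (0 < a)%N -> (a < 4 ^ (e a).+1)%N.
Proof.
elim/ltn_ind: a => a IH a0.
case: (ltngtP a 1) => ha; first lia; last by subst a; rewrite e1.
have [b [b0 ba ab ->]] := @decomp a ha.
have := IH b ba b0; rewrite (expnS 4 (e b).+1); lia.
Qed.
Definition ind n (f : nat -> int) a : int := if (0 < a)%N && (e a == n) then f a else 0.
Definition Z n f N := \sum_(0 <= a < N) ind n f a.
Definition Sig n f := Z n f (4 ^ n.+1)%N.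
Definition bnd n N := forall a, (0 < a)%N -> e a = n -> (a < N)%N.

Lemma bnd4 n : bnd n (4 ^ n.+1)%N.
Proof. by move=> a a0 <-; apply: e_bound. Qed.

Lemma recr (g : nat -> int) N : \sum_(0 <= a < N.+1) g a = \sum_(0 <= a < N) g a + g N.
Proof. exact: big_nat_recr. Qed.

Lemma Z_ext n f N N' : bnd n N -> (N <= N')%N -> Z n f N = Z n f N'.
Proof.
move=> hb hN; rewrite /Z (@big_cat_nat _ _ _ N 0 N' _ _ (leq0n N) hN) /=.
suff -> : \sum_(N <= a < N') ind n f a = 0 by rewrite addr0.
rewrite big_nat_cond big1 // => a /andP[/andP[Ha _] _].
rewrite /ind; case: ifP => // /andP[a0 /eqP ea]; have := hb a a0 ea; lia.
Qed.

Lemma Z_Sig n f N : bnd n N -> Z n f N = Sig n f.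
Proof.
move=> hb; rewrite /Sig (@Z_ext n f N _ hb (leq_maxl N (4 ^ n.+1)%N)).
by rewrite -(@Z_ext n f _ _ (@bnd4 n) (leq_maxr N (4 ^ n.+1)%N)).
Qed.

Lemma Sig_ext n f g : (forall a, (0 < a)%N -> e a = n -> f a = g a) -> Sig n f = Sig n g.
Proof.
move=> h; rewrite /Sig /Z; apply: eq_bigr => a _; rewrite /ind.
by case: ifP => // /andP[a0 /eqP ea]; rewrite h.
Qed.

Lemma Z_add n f g N : Z n (fun a => f a + g a) N = Z n f N + Z n g N.
Proof.
rewrite /Z -big_split /=; apply: eq_bigr => a _; rewrite /ind.
by case: ifP => //; rewrite addr0.
Qed.

Lemma Z_scale n c f N : Z n (fun a => c * f a) N = c * Z n f N.
Proof.
rewrite /Z mulr_sumr; apply: eq_bigr => a _; rewrite /ind.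
by case: ifP => //; rewrite mulr0.
Qed.

Lemma Z_sum n k (P : pred nat) (F : nat -> nat -> int) N :
  Z n (fun a => \sum_(j < k | P j) F j a) N = \sum_(j < k | P j) Z n (F j) N.
Proof.
rewrite /Z exchange_big /=; apply: eq_bigr => a _; rewrite /ind.
by case: ifP => //; rewrite big1.
Qed.

Lemma Sig_add n f g : Sig n (fun a => f a + g a) = Sig n f + Sig n g.
Proof. exact: Z_add. Qed.
Lemma Sig_scale n c f : Sig n (fun a => c * f a) = c * Sig n f.
Proof. exact: Z_scale. Qed.
Lemma Sig_sum n k (P : pred nat) (F : nat -> nat -> int) :
  Sig n (fun a => \sum_(j < k | P j) F j a) = \sum_(j < k | P j) Sig n (F j).
Proof. exact: Z_sum. Qed.

Lemma Sig0 f : Sig 0 f = f 1%N.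
Proof.
have hb : bnd 0 2.
  move=> a a0 ea; case: (ltngtP a 1) => ha; [lia | | lia].
  by have := @e_ge1 a ha; rewrite ea.
rewrite -(@Z_Sig 0 f 2 hb) /Z !recr big_geq // /ind /= e1 /=; lia.
Qed.
Lemma sum4 (g : nat -> int) M : \sum_(0 <= a < 4 * M) g a =
  \sum_(0 <= b < M) (g (4 * b)%N + g (4 * b + 1)%N + g (4 * b + 2)%N + g (4 * b + 3)%N).
Proof.
elim: M => [|M IH]; first by rewrite muln0 !big_geq.
rewrite mulnSr !addnS addn0 !recr IH !addnS !addn0 -!addrA.
by [].
Qed.

Lemma sum2 (u : nat -> int) M : \sum_(0 <= b < M) (u (2 * b)%N + u (2 * b + 1)%N) =
  \sum_(0 <= c < 2 * M) u c.
Proof.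
elim: M => [|M IH]; first by rewrite muln0 !big_geq.
rewrite mulnSr !addnS addn0 !recr IH !addnS !addn0 -!addrA.
by [].
Qed.

Lemma ind_2 n f c : ind n.+1 f (2 * c)%N = ind n (fun c => f (2 * c)%N) c.
Proof.
rewrite /ind; case: (posnP c) => [->|c0] //=.
by rewrite mul2n e_2 // eqSS double_gt0 c0.
Qed.

Lemma ind_4p1 n f b : ind n.+1 f (4 * b + 1)%N = ind n (fun b => f (4 * b + 1)%N) b.
Proof.
rewrite /ind; case: (posnP b) => [->|b0] //=.
  by rewrite e1.
by rewrite e_4p1 // eqSS addn1.
Qed.

Lemma ind_4m1 n f b : ind n.+1 f (4 * b - 1)%N = ind n (fun b => f (4 * b - 1)%N) b.
Proof.
rewrite /ind; case: (posnP b) => [->|b0] //=.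
by rewrite e_4m1 // eqSS (_ : (0 < 4 * b - 1)%N = true) //; lia.
Qed.

Lemma SigS n f : Sig n.+1 f =
  Sig n (fun b => f (2 * b)%N + f (4 * b + 1)%N + f (4 * b - 1)%N).
Proof.
rewrite /Sig (expnS 4 n.+1).
set M := (4 ^ n.+1)%N.
have hb : bnd n M := bnd4 n.
rewrite !Z_add /Z sum4.
set g := ind n.+1 f.
transitivity (\sum_(0 <= b < M) ((g (2 * (2 * b))%N + g (2 * (2 * b + 1))%N)
   + g (4 * b + 1)%N + g (4 * b.+1 - 1)%N)).
  apply: eq_bigr => b _.
  rewrite (_ : (2 * (2 * b) = 4 * b)%N); last lia.
  rewrite (_ : (2 * (2 * b + 1) = 4 * b + 2)%N); last lia.
  rewrite (_ : (4 * b.+1 - 1 = 4 * b + 3)%N); last lia.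
  by rewrite -!addrA; congr (_ + _); rewrite addrC -!addrA; congr (_ + _); rewrite addrC.
rewrite big_split /= big_split /=.
have := sum2 (fun c => g (2 * c)%N) M; rewrite /= => ->.
congr (_ + _ + _).
- rewrite -/(Z n (fun a => f (2 * a)%N) M) (@Z_ext n _ _ _ hb (leq_pmull M (isT : (0 < 2)%N))) /Z /g.
  by apply: eq_bigr => c _; rewrite ind_2.
- by apply: eq_bigr => b _; rewrite /g ind_4p1.
- rewrite -/(Z n (fun a => f (4 * a - 1)%N) M) (@Z_ext n _ _ _ hb (leqnSn M)) /Z big_nat_recl // /ind /= add0r.
  by apply: eq_bigr => b _; rewrite /g ind_4m1.
Qed.

Lemma binom_pm (x : int) k : (x + 1) ^+ k + (x - 1) ^+ k =
  \sum_(i < k.+1 | odd i == odd k) (x ^+ i *+ 'C(k, i)) *+ 2.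
Proof.
rewrite [x + 1]addrC [x - 1]addrC !exprDn -big_split /= [RHS]big_mkcond /=.
apply: eq_bigr => i _; rewrite expr1n mul1r.
have hi : (i <= k)%N by rewrite -ltnS ltn_ord.
rewrite -signr_odd oddB //.
case: (odd i); case: (odd k) => /=; rewrite ?expr0 ?expr1 ?mul1r ?mulN1r ?mulNrn ?addrN ?mulr2n //.
Qed.

Definition pw j (a : nat) : int := (a%:R) ^+ j.

Lemma key k b : (0 < b)%N ->
  pw k (2 * b)%N + pw k (4 * b + 1)%N + pw k (4 * b - 1)%N =
  ((2 ^ k * (2 ^ k.+1 + 1))%N)%:Z * pw k b +
  2 * \sum_(j < k | odd j == odd k) (('C(k, j) * 4 ^ j)%N)%:Z * pw j b.
Proof.
move=> b0; rewrite /pw.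
have -> : ((4 * b + 1)%N%:R : int) = 4 * b%:R + 1 by rewrite natrD natrM.
have -> : ((4 * b - 1)%N%:R : int) = 4 * b%:R - 1.
  by rewrite natrB ?natrM //; lia.
rewrite -addrA binom_pm big_mkcond big_ord_recr /= eqxx -big_mkcond /=.
rewrite mulr_sumr.
have -> : \sum_(i < k | odd i == odd k) ((4 * (b%:R : int)) ^+ i *+ 'C(k, i)) *+ 2 =
   \sum_(i < k | odd i == odd k) 2 * (('C(k, i) * 4 ^ i)%N%:Z * b%:R ^+ i).
  apply: eq_bigr => i _.
  rewrite -natz natrM natrX exprMn -mulr_natl -[_ *+ 2]mulr_natl -mulr_natl.
  ring.
rewrite binn natrM !exprMn -natz natrM natrD !natrX exprS.
have -> : (4 : int) ^+ k = 2 ^+ k * 2 ^+ k by rewrite -exprMn.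
set t := (2 : int) ^+ k; set y := (b%:R : int) ^+ k.
set u := \sum_(i < k | _) _.
ring.
Qed.

Theorem mainTheorem9 (k : nat) (hk : (1 <= k)%N) :
  (forall n : nat, exists M : nat,
      forall a : nat, (0 < a)%N -> e a = n -> (a < M)%N) /\
  (forall S : nat -> nat -> nat,
    (forall j n : nat, is_S j n (S j n)) ->
    fps_mul (G S k)
            (fps_add (fps_const 1)
                     (fps_scale (- ((2 ^ k * (2 ^ k.+1 + 1))%N)%:Z) fps_X))
    = fps_add (fps_const 1)
        (fps_mul (fps_scale 2 fps_X)
           (fps_sum k (fun j => odd j == odd k)
              (fun j => fps_scale (('C(k, j) * 4 ^ j)%N)%:Z (G S j))))).
Proof.
split.
  by move=> n; exists (4 ^ n.+1)%N; exact: bnd4.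
move=> S hS.
have hSZ : forall j n, (S j n)%:Z = Sig n (pw j).
  move=> j n; have [M [hM ->]] := hS j n.
  rewrite -(@Z_Sig n (pw j) M hM) /Z -natz natr_sum.
  case: M hM => [|M] hM; first by rewrite !big_geq.
  rewrite [RHS]big_ltn // /ind /= add0r big_mkcond /=.
  apply: eq_big_nat => a /andP[a1 _]; rewrite a1 /=.
  by case: (e a == n) => //; rewrite natrX.
have hS0 : forall j, (S j 0)%:Z = 1.
  by move=> j; rewrite hSZ Sig0 /pw expr1n.
set K := (2 ^ k * (2 ^ k.+1 + 1))%N.
have rec : forall m, (S k m.+1)%:Z = K%:Z * (S k m)%:Z +
    2 * \sum_(j < k | odd j == odd k) (('C(k, j) * 4 ^ j)%N)%:Z * (S j m)%:Z.
  move=> m; rewrite hSZ SigS.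
  rewrite (@Sig_ext m _ (fun b => K%:Z * pw k b + 2 * \sum_(j < k | odd j == odd k)
       (('C(k, j) * 4 ^ j)%N)%:Z * pw j b)); last first.
    by move=> b b0 _; rewrite key.
  rewrite Sig_add Sig_scale Sig_scale hSZ.
  have := Sig_sum m k (fun j => odd j == odd k)
    (fun j b => (('C(k, j) * 4 ^ j)%N)%:Z * pw j b); rewrite /= => ->.
  congr (_ + _ * _); apply: eq_bigr => j _; by rewrite Sig_scale hSZ.
apply: functional_extensionality => n; rewrite /fps_mul /fps_add /fps_scale /fps_const /fps_X /fps_sum /G.
case: n => [|m].
  rewrite !big_ord1 /= hS0; lia.
rewrite big_ord_recr big_ord_recr /= big1; last first.
  move=> i _; rewrite /=.
  have h1 : (m.+1 - i == 0)%N = false by have := ltn_ord i; lia.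
  have h2 : (m.+1 - i == 1)%N = false by have := ltn_ord i; lia.
  by rewrite h1 h2 /= mulr0 addr0 mulr0.
rewrite subnn subSnn /=.
rewrite big_ord_recl big_ord_recl /=.
rewrite [\sum_(i < m) _]big1; last by move=> i _; rewrite /= mulr0 mul0r.
rewrite /= subSS rec.
rewrite (_ : (m - 0 = m)%N) ?subn0 //.
set u := \sum_(j < k | _) _; set v := \sum_(j < k | _) _.
rewrite -/u; ring.
Qed.
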